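(* Let $n\ge1$, $m\ge1$ and let $v$ be a vertex of $Y_{n,m}$, regarded also as a vertex of $Z_{n,m}$. Then $d_{Z_{n,m}}(v,0)=d_{Y_{n,m}}(v,0)$.
   Context: The Yoke graph $Y_{n,m}$ has vertices the tuples $v=(v_0,\dots,v_{m+1})$ with $v_0,v_{m+1}\in\mathbb{Z}_n$, $v_1,\dots,v_m\in\{0,1\}$, $\sum v_i\equiv0\pmod n$; the dYoke graph $Z_{n,m}$ is defined identically but with $v_1,\dots,v_m\in\{-1,0,1\}$, so the vertex set of $Y_{n,m}$ is contained in that of $Z_{n,m}$. In both, $u\sim v$ iff there is $0\le i\le m$ with $u_j=v_j$ for $j\notin\{i,i+1\}$ and either ($u_i=v_i+1$, $u_{i+1}=v_{i+1}-1$) or ($u_i=v_i-1$, $u_{i+1}=v_{i+1}+1$), buckets mod $n$. $0$ is the all-zero vertex. *)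

(* Defs.v *)
From mathcomp Require Import all_boot all_order all_algebra.
Unset Printing Implicit Defensive.
Import Order.TTheory GRing.Theory Num.Theory.
Local Open Scope ring_scope.

(* Coordinates 0 and m+1
   are the "buckets", elements of Z_n represented by 0 <= v_j < n. *)
Definition vtx (m : nat) := {ffun 'I_m.+2 -> int}.

Definition is_bucket (m : nat) (j : 'I_m.+2) : bool :=
  (val j == 0%N) || (val j == m.+1).

Definition Yvals : seq int := [:: 0; 1].
Definition Zvals : seq int := [:: -1; 0; 1].

Definition is_vertex (S : seq int) (n m : nat) (v : vtx m) : Prop :=
  (forall j : 'I_m.+2,
      if is_bucket m j then (0 <= v j) && (v j < n%:Z) else v j \in S)
  /\ ((\sum_(j < m.+2) v j) %% n%:Z = 0)%Z.

Definition step_eq (n m : nat) (j : 'I_m.+2) (a b d : int) : bool :=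
  if is_bucket m j then ((a - (b + d)) %% n%:Z == 0)%Z else a == b + d.

Definition adj (n m : nat) (u v : vtx m) : Prop :=
  exists i : 'I_m.+1,
    let p : 'I_m.+2 := widen_ord (leqnSn m.+1) i in
    let q : 'I_m.+2 := lift ord0 i in
    (forall j : 'I_m.+2, j != p -> j != q -> u j = v j) /\
    ((step_eq n m p (u p) (v p) 1 && step_eq n m q (u q) (v q) (-1)) \/
     (step_eq n m p (u p) (v p) (-1) && step_eq n m q (u q) (v q) 1)).

Definition walk (S : seq int) (n m : nat) (u w : vtx m) (k : nat) : Prop :=
  exists x : nat -> vtx m,
    [/\ x 0%N = u, x k = w,
        (forall i, (i <= k)%N -> is_vertex S n m (x i)) &
        (forall i, (i < k)%N -> adj n m (x i) (x i.+1))].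

(* d is the graph distance from u to w (undefined if no walk exists). *)
Definition graph_dist (S : seq int) (n m : nat) (u w : vtx m) (d : nat) : Prop :=
  walk S n m u w d /\ (forall k, (k < d)%N -> ~ walk S n m u w k).

Definition zero_vtx (m : nat) : vtx m := [ffun => 0].

(* Main.v *)
Require Import Defs.
From mathcomp Require Import all_boot all_order all_algebra zify ring.
Import Order.TTheory GRing.Theory Num.Theory.
Set Implicit Arguments. Unset Strict Implicit.
Local Open Scope ring_scope.

Definition U (m : nat) (u : vtx m) (k : nat) : int := u (inord k).
Fixpoint F (m : nat) (u : vtx m) (c : int) (j : nat) : int :=
  match j with 0%N => c | j'.+1 => F u c j' + U u j'.+1 end.
Arguments F {m}.
Definition Phi (m : nat) (u : vtx m) (c : int) : nat :=
  (\sum_(j < m.+1) `|F u c j|%N)%N.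
Definition ind (b : bool) : int := if b then 1 else 0.
Lemma indT : ind true = 1. Proof. by []. Qed.
Lemma indF : ind false = 0. Proof. by []. Qed.

Lemma U_ord m (u : vtx m) (j : 'I_m.+2) : U u j = u j.
Proof. by rewrite /U inord_val. Qed.

Lemma modlem (x e n : int) : (n %| x - (((x - e) %% n)%Z + e))%Z.
Proof.
have h := divz_eq (x - e) n. set a := ((x - e) %% n)%Z in h *.
set b := ((x - e) %/ n)%Z in h *.
have -> : x - (a+e) = (x - e) - a by ring.
rewrite h (_ : b * n + a - a = b * n); last by ring.
by rewrite dvdz_mull.
Qed.

Lemma dvd_small (x n : int) : (n %| x)%Z -> 0 <= x -> x < n -> x = 0.
Proof.
move=> /dvdzP [k ->] h1 h2.
have hn : 0 < n by lia.
have : 0 <= k by rewrite -(pmulr_lge0 _ hn).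
have : k < 1 by rewrite -(ltr_pM2r hn); lia.
lia.
Qed.

Lemma step_eq_dvd n m j a b d : step_eq n m j a b d -> (n%:Z %| a - b - d)%Z.
Proof.
rewrite /step_eq; case: ifP => _.
  by move=> /eqP /dvdz_mod0P; rewrite opprD addrA.
by move=> /eqP ->; rewrite (_ : b + d - b - d = 0) ?dvdz0 //; ring.
Qed.

Lemma step_eq_nb n m j a b d : ~~ is_bucket m j -> step_eq n m j a b d -> a = b + d.
Proof. by rewrite /step_eq => /negbTE -> /eqP. Qed.

Lemma isb m (j : 'I_m.+2) : is_bucket m j = (nat_of_ord j == 0%N) || (nat_of_ord j == m.+1).
Proof. by []. Qed.

Lemma val_p m (i : 'I_m.+1) : nat_of_ord (widen_ord (leqnSn m.+1) i) = i.
Proof. by []. Qed.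
Lemma val_q m (i : 'I_m.+1) : nat_of_ord (lift ord0 i) = i.+1.
Proof. exact: lift0. Qed.

Lemma qp m (i : 'I_m.+1) : lift ord0 i != widen_ord (leqnSn m.+1) i.
Proof. by apply/eqP => /(congr1 (@nat_of_ord _)); rewrite (val_q i) val_p; lia. Qed.

Section Core.
Variables (n m : nat) (u v : vtx m) (i : 'I_m.+1) (e : int).
Local Notation p := (widen_ord (leqnSn m.+1) i).
Local Notation q := (@lift m.+2 ord0 i).
Hypothesis H : forall j : 'I_m.+2, j != p -> j != q -> u j = v j.
Hypothesis Hp : step_eq n m p (u p) (v p) e.
Hypothesis Hq : step_eq n m q (u q) (v q) (-e).

Lemma core_a : (n%:Z %| u ord0 - v ord0 - e * ind (i == 0%N :> nat))%Z.
Proof.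
case: (eqVneq (i : nat) 0%N) => hi.
  have -> : (ord0 : 'I_m.+2) = p by apply: ord_inj; rewrite (val_p i) hi.
  by rewrite indT mulr1; apply: step_eq_dvd Hp.
rewrite H; first by rewrite indF mulr0 !subrr dvdz0.
  by apply/eqP => /(congr1 (@nat_of_ord _)) /=; move/eqP: hi; lia.
by apply/eqP => /(congr1 (@nat_of_ord _)); rewrite (val_q i).
Qed.

Lemma core_b k : (1 <= k <= m)%N ->
  U u k - U v k = e * ind (k == i) - e * ind (k == i.+1).
Proof.
move=> /andP [k1 km].
have vk : nat_of_ord (inord k : 'I_m.+2) = k by rewrite inordK //; lia.
case: (eqVneq k i) => hki.
  have Kp : (inord k : 'I_m.+2) = p by apply: ord_inj; rewrite vk /=.
  rewrite /U Kp (step_eq_nb _ Hp); last by rewrite isb /=; lia.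
  rewrite ?hki ?eqxx (_ : (i == i.+1 :> nat) = false) ?indT ?indF; last by lia.
  ring.
case: (eqVneq k i.+1) => hki1.
  have Kq : (inord k : 'I_m.+2) = q by apply: ord_inj; rewrite vk lift0.
  rewrite /U Kq (step_eq_nb _ Hq); last by rewrite isb lift0; lia.
  rewrite indT indF.
  ring.
rewrite /U H; first by rewrite indF; ring.
  by apply/eqP => /(congr1 (@nat_of_ord _)); rewrite vk /=; move/eqP: hki.
by apply/eqP => /(congr1 (@nat_of_ord _)); rewrite vk lift0; move/eqP: hki1.
Qed.

Lemma core_sum : (n%:Z %| \sum_(j < m.+2) u j - \sum_(j < m.+2) v j)%Z.
Proof.
rewrite -sumrB (bigD1 p) //= (bigD1 q) /=; last by rewrite qp.
rewrite big1; last by move=> j /andP [jp jq]; rewrite H // subrr.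
have -> : u p - v p + (u q - v q + 0) = (u p - v p - e) + (u q - v q - - e) by ring.
by apply: rpredD; [exact: step_eq_dvd Hp | exact: step_eq_dvd Hq].
Qed.

End Core.

Lemma F_rel m (u v : vtx m) (cu cv : int) (i : nat) (e : int) :
  cu = cv + e * ind (i == 0%N) ->
  (forall k, (1 <= k <= m)%N -> U u k - U v k = e * ind (k == i) - e * ind (k == i.+1)) ->
  forall j, (j <= m)%N -> F u cu j = F v cv j + e * ind (j == i).
Proof.
move=> hc hk; elim=> [|j IH] hj /=; first by rewrite hc eq_sym.
have h1 : (1 <= j.+1 <= m)%N by rewrite hj.
move: (hk _ h1) => h.
rewrite IH ?(ltnW hj) //.
have -> : U u j.+1 = U v j.+1 + (U u j.+1 - U v j.+1) by ring.
rewrite h eqSS; ring.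
Qed.

Lemma absz_bound (x e : int) (b : bool) : (e = 1 \/ e = -1) ->
  (absz (x + e * ind b)%R <= absz x + b)%N.
Proof. by case=> ->; case: b; rewrite ?indT ?indF /=; lia. Qed.

Lemma sum_ind m (i : 'I_m.+1) : (\sum_(j < m.+1) ((j : nat) == i :> nat))%N = 1%N.
Proof.
rewrite (bigD1 i) //= eqxx big1 // => j.
by rewrite -val_eqE /= => /negPf ->.
Qed.

Lemma adj_split n m (u v : vtx m) : adj n m u v ->
  exists i : 'I_m.+1, exists e : int, (e = 1 \/ e = -1) /\
   (forall j : 'I_m.+2, j != widen_ord (leqnSn m.+1) i -> j != lift ord0 i -> u j = v j) /\
   step_eq n m (widen_ord (leqnSn m.+1) i) (u (widen_ord (leqnSn m.+1) i)) (v (widen_ord (leqnSn m.+1) i)) e /\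
   step_eq n m (lift ord0 i) (u (lift ord0 i)) (v (lift ord0 i)) (-e).
Proof.
case=> i /= [H hd]; exists i.
case: hd => /andP [h1 h2]; [exists 1 | exists (-1)]; rewrite ?opprK; do !split; auto.
Qed.

Lemma phi_step n m (u v : vtx m) cv : adj n m u v -> (n%:Z %| cv - v ord0)%Z ->
  exists cu, (n%:Z %| cu - u ord0)%Z /\ (Phi u cu <= (Phi v cv).+1)%N.
Proof.
move=> /adj_split [i [e [he [H [Hp Hq]]]]] hc.
have ha := core_a H Hp Hq. have hb := core_b H Hp Hq.
exists (cv + e * ind (i == 0%N :> nat)); split.
  have -> : cv + e * ind (i == 0%N :> nat) - u ord0 =
     (cv - v ord0) - (u ord0 - v ord0 - e * ind (i == 0%N :> nat)) by ring.
  by rewrite rpredB.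
have hF := F_rel (erefl _) hb.
rewrite /Phi.
have -> : ((\sum_(j < m.+1) `|F v cv j|%N).+1 =
   \sum_(j < m.+1) (`|F v cv j|%N + ((j : nat) == i :> nat)))%N.
  by rewrite big_split /= sum_ind addn1.
apply: leq_sum => j _; rewrite (hF _ j (ltn_ord j)).
exact: absz_bound.
Qed.

Lemma F_zero m j : F (zero_vtx m) 0 j = 0.
Proof. by elim: j => [|j IH] //=; rewrite IH /U ffunE addr0. Qed.

Lemma walk_lower n m : forall k (x : nat -> vtx m), x k = zero_vtx m ->
  (forall i, (i < k)%N -> adj n m (x i) (x i.+1)) ->
  exists c, (n%:Z %| c - x 0%N ord0)%Z /\ (Phi (x 0%N) c <= k)%N.
Proof.
elim=> [|k IH] x hk ha.
  exists 0; rewrite hk /zero_vtx ffunE subrr dvdz0; split => //.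
  by rewrite /Phi big1 // => j _; rewrite F_zero.
have [c [hc hp]] := IH (fun i => x i.+1) hk (fun i hi => ha i.+1 hi).
have [cu [hcu hpu]] := phi_step (ha 0%N isT) hc.
by exists cu; split => //; apply: leq_trans hpu _.
Qed.

Lemma Y_int n m (u : vtx m) k : is_vertex Yvals n m u -> (1 <= k <= m)%N ->
  U u k = 0 \/ U u k = 1.
Proof.
case=> hv _ hk; have := hv (inord k).
rewrite isb inordK; last by lia.
rewrite (_ : (k == 0%N) || (k == m.+1) = false); last by lia.
by rewrite /U !inE => /orP [] /eqP; auto.
Qed.

Lemma F_mono n m (u : vtx m) c : is_vertex Yvals n m u ->
  forall j j', (j <= j' <= m)%N -> F u c j <= F u c j'.
Proof.
move=> hY j; elim=> [|j' IH] /andP [h1 h2].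
  by have -> : j = 0%N by lia.
rewrite leq_eqVlt in h1; case/orP: h1 => [/eqP -> //| h1].
have h3 : (j <= j' <= m)%N by lia.
have := IH h3.
have h4 : (1 <= j'.+1 <= m)%N by lia.
case: (Y_int hY h4) => /= ->; lia.
Qed.

Lemma base_zero n m (u : vtx m) c : (0 < n)%N -> is_vertex Yvals n m u ->
  (n%:Z %| c - u ord0)%Z -> Phi u c = 0%N -> u = zero_vtx m.
Proof.
move=> hn hY hc hP.
have hF : forall j, (j <= m)%N -> F u c j = 0.
  move=> j hj.
  have : (absz (F u c j) <= Phi u c)%N.
    by rewrite /Phi (bigD1 (Ordinal (hj : (j < m.+1)%N))) //= leq_addr.
  rewrite hP; lia.
have c0 : c = 0 by have := hF 0%N isT.
case: hY => hv hs.
have hint : forall k, (1 <= k <= m)%N -> U u k = 0.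
  case=> [|k] hk; first by lia.
  have := hF k.+1 (proj2 (andP hk)); rewrite /= hF; last by lia.
  by rewrite add0r.
have hu0 : u ord0 = 0.
  move: hc; rewrite c0 sub0r rpredN => hd.
  have := hv ord0; rewrite isb /= => /andP [h1 h2].
  exact: (dvd_small hd h1 h2).
have hall : forall j : 'I_m.+2, (j : nat) != m.+1 -> u j = 0.
  move=> j hj.
  case: (eqVneq (j : nat) 0%N) => hj0.
    by rewrite (_ : j = ord0) //; apply: ord_inj.
  rewrite -U_ord; apply: hint.
  have := ltn_ord j; move: hj hj0; lia.
have hlast : u ord_max = 0.
  have : (\sum_(j < m.+2) u j) = u ord_max.
    have hz : \sum_(i < m.+2 | i != ord_max) u i = 0.
      apply: big1 => j hj; apply: hall.
      by move: hj; apply: contra => /eqP hj; apply/eqP; apply: ord_inj.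
    by rewrite (bigD1 ord_max) //= hz addr0.
  move=> hsum; move: hs; rewrite hsum => /dvdz_mod0P hd.
  have := hv ord_max; rewrite isb /= eqxx => /andP [h1 h2].
  exact: (dvd_small hd h1 h2).
apply/ffunP => j; rewrite ffunE.
case: (eqVneq (j : nat) m.+1) => hj; last by apply: hall.
by rewrite (_ : j = ord_max) //; apply: ord_inj.
Qed.

Lemma abs_step (x e : int) : (e = 1 \/ e = -1) -> 0 < e * (x + e * 1) ->
  absz (x + e * 1)%R = (absz x + true)%N.
Proof. by case=> ->; rewrite /=; lia. Qed.

Definition adjust n m (j : 'I_m.+2) (x : int) : int :=
  if is_bucket m j then (x %% n%:Z)%Z else x.
Definition mv n m (u : vtx m) (i : 'I_m.+1) (e : int) : vtx m :=
  [ffun j => if j == widen_ord (leqnSn m.+1) i then adjust n j (u j - e)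
             else if j == lift ord0 i then adjust n j (u j + e) else u j].

Lemma step_down n m (u : vtx m) c (i : 'I_m.+1) e :
  (0 < n)%N -> is_vertex Yvals n m u -> (n%:Z %| c - u ord0)%Z -> (e = 1 \/ e = -1) ->
  0 < e * F u c i -> ((i == 0%N :> nat) || (U u i - e \in Yvals)) ->
  ((i == m :> nat) || (U u i.+1 + e \in Yvals)) ->
  exists u' c', [/\ is_vertex Yvals n m u', adj n m u u',
                   (n%:Z %| c' - u' ord0)%Z & Phi u c = (Phi u' c').+1].
Proof.
move=> hn [hv hs] hc he hpos hc1 hc2.
set p := widen_ord (leqnSn m.+1) i. set q := lift ord0 i.
set u' := mv n u i e.
have qp' : q != p := qp i.
have u'p : u' p = adjust n p (u p - e) by rewrite /u' /mv ffunE eqxx.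
have u'q : u' q = adjust n q (u q + e) by rewrite /u' /mv ffunE (negbTE qp') eqxx.
have u'o : forall j, j != p -> j != q -> u j = u' j.
  by move=> j h1 h2; rewrite /u' /mv ffunE (negbTE h1) (negbTE h2).
have Hp : step_eq n m p (u p) (u' p) e.
  rewrite u'p /step_eq /adjust; case: (is_bucket m p).
    by apply/eqP/dvdz_mod0P; exact: modlem.
  by apply/eqP; ring.
have Hq : step_eq n m q (u q) (u' q) (-e).
  rewrite u'q /step_eq /adjust; case: (is_bucket m q).
    by apply/eqP/dvdz_mod0P; have := modlem (u q) (-e) n; rewrite opprK.
  by apply/eqP; ring.
have hadj : adj n m u u'.
  exists i => /=; split; first exact: u'o.
  case: he => he; [left | right]; rewrite he in Hp Hq; rewrite ?opprK in Hq;
    by apply/andP; split.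
have ha := core_a u'o Hp Hq. have hb := core_b u'o Hp Hq.
have hcc : c = (c - e * ind (i == 0%N :> nat)) + e * ind (i == 0%N :> nat) by ring.
have hF := F_rel hcc hb.
exists u', (c - e * ind (i == 0%N :> nat)); split => //.
- split.
  + move=> j; case: (eqVneq j p) => [->|jp].
      rewrite u'p /adjust; case hb' : (is_bucket m p).
        apply/andP; split; first by apply: modz_ge0; rewrite eqz_nat -lt0n.
        by apply: ltz_pmod; rewrite ltz_nat.
      move/negbT: hb'; rewrite isb /= => /norP [/negPf h0 _]; move: hc1; rewrite h0 /=.
      by change (U u i) with (U u (nat_of_ord p)); rewrite U_ord.
    case: (eqVneq j q) => [->|jq].
      rewrite u'q /adjust; case hb' : (is_bucket m q).
        apply/andP; split; first by apply: modz_ge0; rewrite eqz_nat -lt0n.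
        by apply: ltz_pmod; rewrite ltz_nat.
      move/negbT: hb'; rewrite isb lift0 /= => h0; move: hc2.
      rewrite (_ : (i == m :> nat) = false) /=; last by lia.
      by rewrite -(U_ord u q) lift0.
    by rewrite -u'o //; exact: hv j.
  + have hd := core_sum u'o Hp Hq.
    apply/dvdz_mod0P; move/dvdz_mod0P: hs => hs.
    have -> : \sum_(j < m.+2) u' j =
       \sum_(j < m.+2) u j - (\sum_(j < m.+2) u j - \sum_(j < m.+2) u' j) by ring.
    by rewrite rpredB.
- have -> : c - e * ind (i == 0%N :> nat) - u' ord0 =
     (c - u ord0) + (u ord0 - u' ord0 - e * ind (i == 0%N :> nat)) by ring.
  by rewrite rpredD.
- rewrite /Phi.
  have -> : ((\sum_(j < m.+1) `|F u' (c - e * ind (i == 0%N :> nat)) j|%N).+1 =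
   \sum_(j < m.+1) (`|F u' (c - e * ind (i == 0%N :> nat)) j|%N + ((j : nat) == i :> nat)))%N.
    by rewrite big_split /= sum_ind addn1.
  apply: eq_bigr => j _; rewrite (hF j (ltn_ord j)).
  case: (eqVneq (j : nat) i) => hji.
    rewrite (hF i (ltn_ord i)) eqxx in hpos.
    rewrite hji indT; rewrite indT in hpos; exact: abs_step.
  by rewrite indF mulr0 addr0 addn0.
Qed.

Lemma select n m (u : vtx m) c k : is_vertex Yvals n m u -> Phi u c = k.+1 ->
  exists i : 'I_m.+1, exists e : int,
   [/\ e = 1 \/ e = -1, 0 < e * F u c i, (i == 0%N :> nat) || (U u i - e \in Yvals)
     & (i == m :> nat) || (U u i.+1 + e \in Yvals)].
Proof.
move=> hY hP.
have hmono := F_mono c hY.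
case: (ltrP 0 (F u c m)) => hm.
  pose P := fun j => (j <= m)%N && (F u c j == F u c m).
  have exP : exists j, P j by exists m; apply/andP; split.
  case: (ex_minnP exP) => i /andP [him /eqP hi] hmin.
  exists (Ordinal (him : (i < m.+1)%N)), 1 => /=; split; first by left.
  - by rewrite mul1r hi.
  - case: i him hi hmin => [|i] him hi hmin; first by [].
    apply/orP; right.
    have h1 : (1 <= i.+1 <= m)%N by rewrite him.
    case: (Y_int hY h1) => hU; last by rewrite hU subrr inE.
    have : P i.
      rewrite /P; apply/andP; split; first by lia.
      by apply/eqP; rewrite -hi /= hU addr0.
    by move/hmin => h; exfalso; lia.
  - case: (eqVneq i m) => him'; first by rewrite ?him' ?eqxx.
    apply/orP; right.
    have h1 : (1 <= i.+1 <= m)%N by lia.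
    have h2 : (i.+1 <= m <= m)%N by rewrite leqnn andbT; lia.
    have := hmono _ _ h2.
    case: (Y_int hY h1) => hU; first by rewrite hU.
    by rewrite /= hU hi => h; exfalso; lia.
case: (ltrP (F u c 0) 0) => h0.
  pose P := fun j => (j <= m)%N && (F u c j == F u c 0).
  have exP : exists j, P j by exists 0%N; apply/andP; split.
  have ubP : forall j, P j -> (j <= m)%N by move=> j /andP [].
  case: (ex_maxnP exP ubP) => i /andP [him /eqP hi] hmax.
  exists (Ordinal (him : (i < m.+1)%N)), (-1) => /=; split; first by right.
  - by rewrite hi; lia.
  - case: i him hi hmax => [|i] him hi hmax; first by [].
    apply/orP; right.
    have h1 : (1 <= i.+1 <= m)%N by rewrite him.
    have h3 : (0 <= i <= m)%N by lia.
    have := hmono _ _ h3; rewrite /= in hi.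
    case: (Y_int hY h1) => hU; first by rewrite hU.
    rewrite hU in hi => h; rewrite /= in h; exfalso; lia.
  - case: (eqVneq i m) => him'; first by rewrite ?him' ?eqxx.
    apply/orP; right.
    have h1 : (1 <= i.+1 <= m)%N by lia.
    case: (Y_int hY h1) => hU; last by rewrite hU subrr inE.
    have : P i.+1.
      rewrite /P; apply/andP; split; first by lia.
      by apply/eqP; rewrite /= hU addr0 hi.
    by move/hmax => h; exfalso; lia.
exfalso; move: hP; rewrite /Phi big1 // => j _.
have hj : (0 <= j <= m)%N by have := ltn_ord j; lia.
have hj2 : (j <= m <= m)%N by have := ltn_ord j; lia.
have := hmono _ _ hj; have := hmono _ _ hj2; lia.
Qed.

Lemma walk_upper n m : (0 < n)%N -> forall k (u : vtx m) c, is_vertex Yvals n m u ->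
  (n%:Z %| c - u ord0)%Z -> Phi u c = k -> walk Yvals n m u (zero_vtx m) k.
Proof.
move=> hn; elim=> [|k IH] u c hY hc hP.
  have hz := base_zero hn hY hc hP.
  exists (fun _ => u); split => //; by case.
have [i [e [he hpos h1 h2]]] := select hY hP.
have [u' [c' [hY' hadj hc' hP']]] := step_down hn hY hc he hpos h1 h2.
have hk : Phi u' c' = k by move: hP; rewrite hP'; case.
have [x [x0 xk xv xa]] := IH u' c' hY' hc' hk.
exists (fun j => if j is j'.+1 then x j' else u); split => //=.
  by case=> [|j] hj //=; apply: xv.
by case=> [|j] hj /=; [rewrite x0 | apply: xa].
Qed.

Lemma YZ n m (u : vtx m) : is_vertex Yvals n m u -> is_vertex Zvals n m u.
Proof.
case=> hv hs; split => // j; have := hv j; case: ifP => // _.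
by rewrite !inE => /orP [] ->; rewrite ?orbT.
Qed.

Lemma walkYZ n m (u w : vtx m) k : walk Yvals n m u w k -> walk Zvals n m u w k.
Proof.
case=> x [h0 hk hv ha]; exists x; split => // i hi; exact: YZ (hv i hi).
Qed.

Lemma key n m (v : vtx m) k : (1 <= n)%N -> is_vertex Yvals n m v ->
  walk Zvals n m v (zero_vtx m) k -> exists k', (k' <= k)%N /\ walk Yvals n m v (zero_vtx m) k'.
Proof.
move=> hn hY [x [x0 xk _ xa]].
have [c [hc hp]] := walk_lower xk xa.
rewrite x0 in hc hp.
exists (Phi v c); split => //.
exact: (walk_upper hn hY hc).
Qed.

Theorem corollary5p33 (n m : nat) (hn : (1 <= n)%N) (hm : (1 <= m)%N) (v : vtx m) :
  is_vertex Yvals n m v ->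
  forall d : nat,
    graph_dist Zvals n m v (zero_vtx m) d <-> graph_dist Yvals n m v (zero_vtx m) d.
Proof.
move=> hY d; split.
  case=> hw hmin.
  have [k' [hk' hw']] := key hn hY hw.
  case: (ltnP k' d) => h.
    by exfalso; apply: (hmin k' h); exact: walkYZ.
  have -> : d = k' by apply/eqP; rewrite eqn_leq hk' h.
  split => // k hk hwk; apply: (hmin k); [lia | exact: walkYZ hwk].
case=> hw hmin; split; first exact: walkYZ.
move=> k hk hwk.
have [k' [hk' hw']] := key hn hY hwk.
by apply: (hmin k') => //; apply: leq_ltn_trans hk' hk.
Qed.
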